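(* For any $\alpha>0$, $\nu>-1$ and $x>0$, $$0<\frac{L_{\nu+1}^{\alpha-1}(-x)}{L_{\nu}^{\alpha}(-x)}<\frac{\alpha+x+\sqrt{(\alpha+x)^2+4(\nu+1)x}}{2(\nu+1)} .$$
   Context: $L_\nu^\alpha$ denotes the Laguerre function $L_\nu^\alpha(x)=\dfrac{\Gamma(\nu+\alpha+1)}{\Gamma(\nu+1)\Gamma(\alpha+1)}\,{}_1F_1(-\nu;\alpha+1;x)$, which reduces to the generalized Laguerre polynomial when $\nu$ is a nonnegative integer. *)

(* Defs.v *)
From Stdlib Require Import Reals.
From Coquelicot Require Import Coquelicot.
Open Scope R_scope.

Definition Gamma (s : R) : R :=
  RInt_gen (fun t => Rpower t (s - 1) * exp (- t)) (at_right 0) (Rbar_locally p_infty).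

Fixpoint poch (a : R) (k : nat) : R :=
  match k with
  | O => 1
  | S k' => poch a k' * (a + INR k')
  end.

Definition hyp1F1 (a b z : R) : R :=
  Series (fun k => poch a k / (poch b k * INR (Factorial.fact k)) * z ^ k).

Definition Laguerre (nu alpha x : R) : R :=
  Gamma (nu + alpha + 1) / (Gamma (nu + 1) * Gamma (alpha + 1))
  * hyp1F1 (- nu) (alpha + 1) x.

(* Main.v *)
Require Import Defs.
From Stdlib Require Import Reals.
From Coquelicot Require Import Coquelicot.
From Stdlib Require Import Lra Lia Factorial.
From Stdlib Require Classical_Prop.
Open Scope R_scope.


Lemma poch_pos a k : 0 < a -> 0 < poch a k.
Proof.
  intros Ha; induction k as [|k IH]; simpl; [lra|].
  apply Rmult_lt_0_compat; [exact IH|]. pose proof (pos_INR k); lra.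
Qed.

Lemma poch_S a k : poch a (S k) = poch a k * (a + INR k).
Proof. reflexivity. Qed.

Lemma poch_shift c k : poch c (S k) = c * poch (c + 1) k.
Proof.
  induction k as [|k IH]; [simpl; ring|].
  rewrite (poch_S c (S k)), IH, (poch_S (c+1) k), S_INR. ring.
Qed.

Lemma fact_pos k : 0 < INR (fact k).
Proof. apply lt_0_INR, lt_O_fact. Qed.

Definition uu b c k := poch c k / (poch b k * INR (fact k)).
Definition vv m := (-1) ^ m / INR (fact m).
Definition WW n b c := sum_f_R0 (fun k => uu b c k * vv (n - k)) n.
Definition ZZ n b c := (-1) ^ n * poch (b - c) n / (poch b n * INR (fact n)).

Lemma WW_rec n b c : 0 < b ->
  INR (S n) * WW (S n) b c = - WW n b c + c / b * WW n (b + 1) (c + 1).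
Proof.
  intros Hb. unfold WW.
  assert (E: forall k, (k <= S n)%nat ->
     INR (S n) * (uu b c k * vv (S n - k)) =
     INR k * uu b c k * vv (S n - k) + uu b c k * (INR (S n - k) * vv (S n - k))).
  { intros k Hk. rewrite minus_INR by lia. ring. }
  rewrite scal_sum.
  rewrite (sum_eq _ (fun k => INR k * uu b c k * vv (S n - k) + uu b c k * (INR (S n - k) * vv (S n - k)))).
  2:{ intros i Hi. rewrite Rmult_comm. apply E. exact Hi. }
  rewrite sum_plus.
  assert (E2 : sum_f_R0 (fun k => uu b c k * (INR (S n - k) * vv (S n - k))) (S n)
             = - sum_f_R0 (fun k => uu b c k * vv (n - k)) n).
  { rewrite tech5. replace (S n - S n)%nat with 0%nat by lia. simpl (INR 0).
    rewrite Rmult_0_l, Rmult_0_r, Rplus_0_r.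
    match goal with |- _ = - ?S => replace (- S) with ((-1) * S) by ring end. rewrite scal_sum.
    apply sum_eq. intros i Hi. replace (S n - i)%nat with (S (n - i)) by lia.
    unfold vv. rewrite fact_simpl. rewrite mult_INR. simpl pow.
    pose proof (fact_pos (n - i)). rewrite S_INR.
    field. split; [lra|]. pose proof (pos_INR (n - i)); lra. }
  assert (E1 : sum_f_R0 (fun k => INR k * uu b c k * vv (S n - k)) (S n)
             = c / b * sum_f_R0 (fun k => uu (b + 1) (c + 1) k * vv (n - k)) n).
  { rewrite decomp_sum by lia. simpl pred. simpl (INR 0).
    rewrite Rmult_0_l, Rmult_0_l, Rplus_0_l. rewrite scal_sum.
    apply sum_eq. intros i Hi. replace (S n - S i)%nat with (n - i)%nat by lia.
    unfold uu. rewrite !poch_shift. rewrite fact_simpl. rewrite mult_INR.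
    pose proof (fact_pos i). pose proof (poch_pos (b+1) i ltac:(lra)).
    rewrite S_INR. field. pose proof (pos_INR i). repeat split; lra. }
  rewrite E1, E2. ring.
Qed.

Lemma WW_ZZ n : forall b c, 0 < b -> WW n b c = ZZ n b c.
Proof.
  induction n as [|n IH]; intros b c Hb.
  - unfold WW, ZZ, uu, vv. simpl. field.
  - assert (H := WW_rec n b c Hb). rewrite (IH b c Hb), (IH (b+1) (c+1) ltac:(lra)) in H.
    assert (Hn : 0 < INR (S n)) by (apply lt_0_INR; lia).
    apply (Rmult_eq_reg_l (INR (S n))); [|lra]. rewrite H.
    unfold ZZ. replace (b + 1 - (c + 1)) with (b - c) by ring.
    pose proof (fact_pos n). pose proof (poch_pos b n Hb).
    assert (Hs: poch (b+1) n = poch b n * (b + INR n) / b).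
    { pose proof (poch_shift b n) as Hs. rewrite poch_S in Hs. field_simplify_eq; [|lra]. lra. }
    rewrite Hs. rewrite !poch_S. rewrite fact_simpl, mult_INR, S_INR. simpl pow.
    pose proof (pos_INR n).
    field. repeat split; lra.
Qed.

Lemma lim_inv_S M : is_lim_seq (fun k => M / (INR k + 1)) 0.
Proof.
  assert (H: is_lim_seq (fun k => INR (S k)) p_infty).
  { apply (is_lim_seq_incr_1 INR). apply is_lim_seq_INR. }
  apply is_lim_seq_inv in H; [|discriminate].
  apply (is_lim_seq_scal_l _ M) in H. simpl in H.
  replace (Finite 0) with (Rbar_mult M 0) by (simpl; f_equal; ring).
  eapply is_lim_seq_ext; [|exact H]. intros k. rewrite <- S_INR. reflexivity.
Qed.

Lemma ex_series_ratio (d : nat -> R) M :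
  (forall k, 0 < d k) -> (forall k, d (S k) <= M / (INR k + 1) * d k) -> ex_series d.
Proof.
  intros Hp Hr. apply ex_series_Rabs. apply (ex_series_DAlembert d 0); [lra| |].
  - intros n; specialize (Hp n); lra.
  - apply (is_lim_seq_le_le (fun _ => 0) _ (fun k => M / (INR k + 1))).
    + intros n. split; [apply Rabs_pos|].
      pose proof (Hp (S n)). specialize (Hp n). rewrite Rabs_pos_eq.
      * apply (Rmult_le_reg_r (d n)); [lra|]. unfold Rdiv at 1. rewrite Rmult_assoc, Rinv_l; [|lra].
        rewrite Rmult_1_r. apply Hr.
      * apply Rlt_le, Rdiv_lt_0_compat; lra.
    + apply is_lim_seq_const.
    + apply lim_inv_S.
Qed.

Definition ww b c x k := uu b c k * x ^ k.

Lemma ww_pos b c x k : 0 < b -> 0 < c -> 0 < x -> 0 < ww b c x k.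
Proof.
  intros. unfold ww, uu. apply Rmult_lt_0_compat; [|apply pow_lt; lra].
  apply Rdiv_lt_0_compat; [apply poch_pos; lra|].
  apply Rmult_lt_0_compat; [apply poch_pos; lra| apply fact_pos].
Qed.

Lemma ww_S b c x k : 0 < b ->
  ww b c x (S k) = ww b c x k * (c + INR k) * x / ((b + INR k) * (INR k + 1)).
Proof.
  intros Hb. unfold ww, uu. rewrite !poch_S, fact_simpl, mult_INR, S_INR. simpl pow.
  pose proof (poch_pos b k Hb). pose proof (fact_pos k). pose proof (pos_INR k).
  field. repeat split; lra.
Qed.

Lemma ex_series_ww2 b c x : 0 < b -> 0 < c -> 0 < x ->
  ex_series (fun k => (INR k + 1) ^ 2 * ww b c x k).
Proof.
  intros Hb Hc Hx. apply (ex_series_ratio _ (4 * (c / b + 1) * x)).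
  - intros k. apply Rmult_lt_0_compat; [|apply ww_pos; auto]. pose proof (pos_INR k). nra.
  - intros k. rewrite ww_S by auto. rewrite S_INR.
    pose proof (pos_INR k) as HK. set (K := INR k) in *. pose proof (ww_pos b c x k Hb Hc Hx) as Hw.
    set (w := ww b c x k) in *.
    assert (H1 : (c + K) * b <= (c + b) * (b + K)) by nra.
    assert (H2 : (K + 1 + 1) ^ 2 <= 4 * (K + 1) ^ 2) by nra.
    apply (Rmult_le_reg_r ((b + K) * (K + 1) / (w * x))).
    { apply Rdiv_lt_0_compat; nra. }
    field_simplify; try nra.
    apply (Rmult_le_reg_r b); [lra|].
    match goal with |- _ <= ?P / b * b => replace (P / b * b) with P by (field; lra) end.
    assert (H3: (K + 1 + 1) ^ 2 * ((c + K) * b) <= 4 * (K + 1) ^ 2 * ((c + K) * b))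
      by (apply Rmult_le_compat_r; nra).
    assert (H4: 4 * (K + 1) ^ 2 * ((c + K) * b) <= 4 * (K + 1) ^ 2 * ((c + b) * (b + K)))
      by (apply Rmult_le_compat_l; nra).
    nra.
Qed.

Lemma ex_series_ww b c x : 0 < b -> 0 < c -> 0 < x -> ex_series (ww b c x).
Proof.
  intros Hb Hc Hx. refine (ex_series_le _ _ _ (ex_series_ww2 b c x Hb Hc Hx)).
  intros n. pose proof (ww_pos b c x n Hb Hc Hx). pose proof (pos_INR n).
  change (norm (ww b c x n)) with (Rabs (ww b c x n)). rewrite Rabs_pos_eq by lra.
  rewrite <- (Rmult_1_l (ww b c x n)) at 1. apply Rmult_le_compat_r; nra.
Qed.

Lemma exp_series y : is_series (fun n => y ^ n / INR (fact n)) (exp y).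
Proof.
  pose proof (is_exp_Reals y) as H. unfold is_pseries in H.
  eapply is_series_ext; [|exact H]. intros n. rewrite pow_n_pow. reflexivity.
Qed.

Lemma kummer a b x : 0 < b -> 0 < b - a -> 0 < x ->
  hyp1F1 a b (- x) = exp (- x) * Series (ww b (b - a) x).
Proof.
  intros Hb Hc Hx. set (c := b - a) in *.
  assert (hA := ex_series_ww b c x Hb Hc Hx).
  assert (hB := exp_series (- x)).
  assert (hAa : ex_series (fun n => Rabs (ww b c x n))).
  { eapply ex_series_ext; [|exact hA]. intros n. rewrite Rabs_pos_eq; [reflexivity|].
    apply Rlt_le, ww_pos; auto. }
  assert (hBa : ex_series (fun n => Rabs ((- x) ^ n / INR (fact n)))).
  { exists (exp x). eapply is_series_ext; [|apply (exp_series x)]. intros n.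
    unfold Rdiv. rewrite Rabs_mult, Rabs_inv, <- RPow_abs, Rabs_Ropp.
    rewrite (Rabs_pos_eq x), (Rabs_pos_eq (INR _)); [reflexivity| |lra].
    apply pos_INR. }
  pose proof (is_series_mult _ _ _ _ (Series_correct _ hA) hB hAa hBa) as H.
  unfold hyp1F1. rewrite Rmult_comm. apply is_series_unique.
  eapply is_series_ext; [|exact H]. intros n. cbv beta.
  transitivity (x ^ n * WW n b c).
  - unfold WW. rewrite scal_sum. apply sum_eq. intros k Hk.
    unfold ww, vv. replace (- x) with (-1 * x) by ring.
    rewrite Rpow_mult_distr.
    replace (x ^ n) with (x ^ k * x ^ (n - k)) by (rewrite <- pow_add; f_equal; lia).
    field. apply Rgt_not_eq, fact_pos.
  - rewrite WW_ZZ by auto. unfold ZZ. replace (b - c) with a by (unfold c; ring).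
    replace (- x) with (-1 * x) by ring. rewrite Rpow_mult_distr.
    pose proof (fact_pos n). pose proof (poch_pos b n Hb).
    match goal with |- ?A = ?B => change (@eq R A B) end. field. split; lra.
Qed.

Lemma series_lim (a : nat -> R) l : is_series a l -> is_lim_seq (fun N => sum_f_R0 a N) l.
Proof.
  intros H. eapply is_lim_seq_ext; [intros N; apply sum_n_Reals|]. exact H.
Qed.

Definition Pk (w : nat -> R) (i N : nat) := sum_f_R0 (fun k => INR k ^ i * w k) N.

Lemma Q_expand (w : nat -> R) m N :
  sum_f_R0 (fun k => w k * (INR k - m) ^ 2) N = Pk w 2 N - 2 * m * Pk w 1 N + m ^ 2 * Pk w 0 N.
Proof. unfold Pk. induction N as [|N IH]; [simpl; ring|]. rewrite !tech5, IH. ring. Qed.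

Lemma cs_partial (w : nat -> R) (Hw : forall k, 0 < w k) N : (1 <= N)%nat ->
  w 0%nat * w 1%nat <= Pk w 0 N * Pk w 2 N - Pk w 1 N ^ 2.
Proof.
  intros HN. induction HN as [|N HN IH].
  - unfold Pk. simpl. lra.
  - assert (HQ := Q_expand w (INR (S N)) N).
    assert (HQ0 : 0 <= sum_f_R0 (fun k => w k * (INR k - INR (S N)) ^ 2) N).
    { apply cond_pos_sum. intros k. pose proof (Hw k). apply Rmult_le_pos; [lra|apply pow2_ge_0]. }
    unfold Pk in *. rewrite !tech5.
    pose proof (Hw (S N)). set (m := INR (S N)) in *.
    replace (INR (S N)) with m by reflexivity.
    set (A := sum_f_R0 (fun k => INR k ^ 0 * w k) N) in *.
    set (B := sum_f_R0 (fun k => INR k ^ 1 * w k) N) in *.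
    set (C := sum_f_R0 (fun k => INR k ^ 2 * w k) N) in *.
    assert (E: (A + m ^ 0 * w (S N)) * (C + m ^ 2 * w (S N)) - (B + m ^ 1 * w (S N)) ^ 2
      = (A * C - B ^ 2) + w (S N) * (C - 2 * m * B + m ^ 2 * A)) by ring.
    rewrite E. rewrite HQ in HQ0. nra.
Qed.

Lemma cs_series (w : nat -> R) (Hw : forall k, 0 < w k) S0 S1 S2 :
  is_series w S0 -> is_series (fun k => INR k * w k) S1 -> is_series (fun k => INR k ^ 2 * w k) S2 ->
  S1 ^ 2 < S0 * S2.
Proof.
  intros H0 H1 H2.
  assert (L: is_lim_seq (fun N => Pk w 0 N * Pk w 2 N - Pk w 1 N ^ 2) (S0 * S2 - S1 ^ 2)).
  { apply is_lim_seq_minus'. apply is_lim_seq_mult'.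
    - eapply is_lim_seq_ext; [|apply (series_lim _ _ H0)]. intros N. unfold Pk.
      apply sum_eq. intros; simpl; ring.
    - eapply is_lim_seq_ext; [|apply (series_lim _ _ H2)]. intros N. reflexivity.
    - assert (L1: is_lim_seq (Pk w 1) S1).
      { eapply is_lim_seq_ext; [|apply (series_lim _ _ H1)]. intros N; unfold Pk.
        apply sum_eq; intros; simpl; ring. }
      pose proof (is_lim_seq_mult' _ _ _ _ L1 L1) as L2.
      eapply is_lim_seq_ext; [|replace (S1 ^ 2) with (S1 * S1) by ring; exact L2].
      intros N; simpl; ring. }
  assert (Hle : Rbar_le (w 0%nat * w 1%nat) (S0 * S2 - S1 ^ 2)).
  { apply (is_lim_seq_le_loc (fun _ => w 0%nat * w 1%nat) (fun N => Pk w 0 N * Pk w 2 N - Pk w 1 N ^ 2)); [|apply is_lim_seq_const| exact L].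
    exists 1%nat. intros n Hn. apply cs_partial; auto. }
  simpl in Hle. pose proof (Hw 0%nat). pose proof (Hw 1%nat). nra.
Qed.

Ltac toR := match goal with |- ?A = ?B => change (@eq R A B) end.
Ltac unsc := unfold scal, plus, opp; simpl; unfold mult; simpl.

Lemma series_pos (w : nat -> R) l : (forall k, 0 < w k) -> is_series w l -> 0 < l.
Proof.
  intros Hw H.
  assert (Hle : Rbar_le (w 0%nat) l).
  { apply (is_lim_seq_le (fun _ => w 0%nat) (fun N => sum_f_R0 w N)); [|apply is_lim_seq_const|apply series_lim, H].
    intros N. induction N as [|N IH]; [simpl; lra|]. rewrite tech5. pose proof (Hw (S N)). lra. }
  simpl in Hle. pose proof (Hw 0%nat). lra.
Qed.

Lemma uu_shift a c k : 0 < a -> uu a c k = uu (a + 1) c k * (a + INR k) / a.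
Proof.
  intros Ha. unfold uu.
  pose proof (poch_shift a k) as H. rewrite poch_S in H.
  pose proof (poch_pos (a+1) k ltac:(lra)). pose proof (poch_pos a k Ha). pose proof (fact_pos k).
  pose proof (pos_INR k).
  assert (E: poch a k = a * poch (a + 1) k / (a + INR k)) by (field_simplify_eq; lra).
  rewrite E. field. repeat split; lra.
Qed.

Lemma main_series al c x : 0 < al -> 0 < c -> 0 < x ->
  0 < Series (ww (al + 1) c x) /\
  (al * Series (ww al c x) / Series (ww (al + 1) c x)) ^ 2
  - (al + x) * (al * Series (ww al c x) / Series (ww (al + 1) c x)) - (c - al) * x < 0.
Proof.
  intros Ha Hc Hx.
  set (w := ww (al + 1) c x).
  assert (Hw : forall k, 0 < w k) by (intros; apply ww_pos; lra).
  assert (E2 := ex_series_ww2 (al + 1) c x ltac:(lra) Hc Hx). fold w in E2.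
  assert (E0 : ex_series w) by (apply ex_series_ww; lra).
  assert (E1 : ex_series (fun k => INR k * w k)).
  { refine (ex_series_le _ _ _ E2). intros n. change (norm ?z) with (Rabs z).
    pose proof (Hw n). pose proof (pos_INR n). rewrite Rabs_pos_eq by nra.
    apply Rmult_le_compat_r; nra. }
  assert (E3 : ex_series (fun k => INR k ^ 2 * w k)).
  { refine (ex_series_le _ _ _ E2). intros n. change (norm ?z) with (Rabs z).
    pose proof (Hw n). pose proof (pos_INR n). rewrite Rabs_pos_eq by nra.
    apply Rmult_le_compat_r; nra. }
  set (S0 := Series w). set (S1 := Series (fun k => INR k * w k)).
  set (S2 := Series (fun k => INR k ^ 2 * w k)).
  assert (H0 := Series_correct _ E0). assert (H1 := Series_correct _ E1).
  assert (H3 := Series_correct _ E3). fold S0 S1 S2 in H0, H1, H3.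
  assert (HS0 : 0 < S0) by (apply (series_pos w); auto).
  assert (Hf : Series (ww al c x) = S0 + S1 / al).
  { apply is_series_unique.
    pose proof (is_series_plus _ _ _ _ H0 (is_series_scal (/ al) _ _ H1)) as H.
    replace (S0 + S1 / al) with (plus S0 (scal (/ al) S1))
      by (change (plus ?a ?b) with (a + b); change (scal ?a ?b) with (a * b); toR; field; lra).
    eapply is_series_ext; [|exact H]. intros n. unfold w, ww.
    rewrite (uu_shift al c n Ha). change (plus ?a ?b) with (a + b). change (scal ?a ?b) with (a * b).
    toR. field. lra. }
  assert (Hrel : S2 + al * S1 = x * (c * S0 + S1)).
  { set (v := fun k => INR k * (INR k + al) * w k).
    assert (Hv1 : is_series v (S2 + al * S1)).
    { pose proof (is_series_plus _ _ _ _ H3 (is_series_scal al _ _ H1)) as H.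
      eapply is_series_ext; [|exact H]. intros n. unfold v.
      change (plus ?a ?b) with (a + b). change (scal ?a ?b) with (a * b). toR. ring. }
    assert (Hv2 : is_series v (x * (c * S0 + S1))).
    { apply is_series_decr_1.
      pose proof (is_series_scal x _ _ (is_series_plus _ _ _ _ (is_series_scal c _ _ H0) H1)) as H.
      unfold v at 2. change (opp ?a) with (- a). change (plus ?a ?b) with (a + b). simpl (INR 0).
      replace (x * (c * S0 + S1) + - (0 * (0 + al) * w 0%nat)) with (scal x (plus (scal c S0) S1))
        by (unsc; ring).
      eapply is_series_ext; [|exact H]. intros n. unfold v, w. rewrite ww_S by lra.
      rewrite S_INR. unsc.
      pose proof (pos_INR n). toR. field. lra. }
    rewrite <- (is_series_unique _ _ Hv1). apply is_series_unique. exact Hv2. }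
  assert (Hcs := cs_series w Hw S0 S1 S2 H0 H1 H3).
  split; [exact HS0|]. fold w. rewrite Hf.
  replace (al * (S0 + S1 / al) / S0) with (al + S1 / S0) by (field; lra).
  apply (Rmult_lt_reg_r (S0 ^ 2)); [nra|]. rewrite Rmult_0_l.
  replace (((al + S1 / S0) ^ 2 - (al + x) * (al + S1 / S0) - (c - al) * x) * S0 ^ 2)
    with (S1 ^ 2 - S0 * (x * (c * S0 + S1) - al * S1)) by (field; lra).
  rewrite <- Hrel. nra.
Qed.


Section Imp.
Variable f : R -> R.
Hypothesis fc : forall t, 0 < t -> continuous f t.
Hypothesis fp : forall t, 0 < t -> 0 <= f t.

Lemma exR a b : 0 < a -> a <= b -> ex_RInt f a b.
Proof.
  intros Ha Hab. apply (@ex_RInt_continuous R_CompleteNormedModule). intros z Hz.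
  rewrite Rmin_left in Hz by lra. apply fc. lra.
Qed.

Lemma RInt_pos a b : 0 < a -> a <= b -> 0 <= RInt f a b.
Proof.
  intros Ha Hab. apply RInt_ge_0; auto. apply exR; auto. intros; apply fp; lra.
Qed.

Lemma chas a b c : 0 < a -> a <= b -> b <= c -> RInt f a c = RInt f a b + RInt f b c.
Proof.
  intros. rewrite <- (RInt_Chasles f a b c); [reflexivity| |]; apply exR; lra.
Qed.

Lemma mono a' a b b' : 0 < a' -> a' <= a -> a <= b -> b <= b' -> RInt f a b <= RInt f a' b'.
Proof.
  intros. rewrite (chas a' a b') by lra. rewrite (chas a b b') by lra.
  pose proof (RInt_pos a' a). pose proof (RInt_pos b b'). lra.
Qed.

Lemma improper_sup B :
  (forall a b, 0 < a -> a <= 1 -> 1 <= b -> RInt f a b <= B) ->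
  exists L, is_RInt_gen f (at_right 0) (Rbar_locally p_infty) L /\ RInt f 1 2 <= L.
Proof.
  intros HB.
  set (E := fun r => exists a b, 0 < a /\ a <= b /\ r = RInt f a b).
  assert (Hbd : bound E).
  { exists B. intros r [a [b [Ha [Hab ->]]]].
    eapply Rle_trans; [apply (mono (Rmin a 1) a b (Rmax b 1))|].
    - apply Rmin_pos; lra.
    - apply Rmin_l.
    - lra.
    - apply Rmax_l.
    - apply HB; [apply Rmin_pos; lra|apply Rmin_r|apply Rmax_r]. }
  assert (Hne : exists r, E r) by (exists (RInt f 1 2), 1, 2; repeat split; lra).
  destruct (completeness E Hbd Hne) as [L [HL1 HL2]].
  exists L. split.
  2:{ apply HL1. exists 1, 2. repeat split; lra. }
  apply filterlimi_locally. intros eps.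
  assert (Hex : exists a0 b0, 0 < a0 /\ a0 <= b0 /\ L - eps < RInt f a0 b0).
  { apply Classical_Prop.NNPP. intros Hn.
    assert (Hub : is_upper_bound E (L - eps)).
    { intros r [a [b [Ha [Hab ->]]]]. apply Rnot_lt_le. intros Hlt. apply Hn.
      exists a, b. auto. }
    specialize (HL2 _ Hub). destruct eps as [e He]. simpl in HL2. lra. }
  destruct Hex as [a0 [b0 [Ha0 [Hab0 Hlt]]]].
  apply (Filter_prod _ _ _ (fun a => 0 < a < a0) (fun b => b0 < b)).
  - exists (mkposreal a0 Ha0). intros y Hy Hy0. split; [exact Hy0|].
    unfold ball in Hy; simpl in Hy. unfold AbsRing_ball, abs, minus, plus, opp in Hy; simpl in Hy.
    rewrite Rabs_pos_eq in Hy by lra. lra.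
  - exists b0. auto.
  - intros a b Ha Hb. simpl. exists (RInt f a b). split.
    + apply (@RInt_correct R_CompleteNormedModule), exR; lra.
    + assert (H1 : RInt f a0 b0 <= RInt f a b) by (apply mono; lra).
      assert (H2 : RInt f a b <= L) by (apply HL1; exists a, b; repeat split; lra).
      unfold ball; simpl. unfold AbsRing_ball, abs, minus, plus, opp; simpl.
      rewrite Rabs_left1 by lra. lra.
Qed.
End Imp.


Lemma exp_le' x y : x <= y -> exp x <= exp y.
Proof. intros H. destruct (Rle_lt_or_eq_dec x y H) as [H'|H']; [apply Rlt_le, exp_increasing; auto| subst; lra]. Qed.

Lemma lnle p t : 0 < p -> 0 < t -> p * ln t <= t / 2 + p * (ln (2 * p) - 1).
Proof.
  intros Hp Ht. pose proof (exp_ineq1_le (ln (t / (2 * p)))) as H.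
  rewrite exp_ln in H by (apply Rdiv_lt_0_compat; lra).
  rewrite ln_div in H by lra.
  assert (H2 : p * (ln t - ln (2 * p)) <= p * (t / (2 * p) - 1)) by (apply Rmult_le_compat_l; lra).
  replace (p * (t / (2 * p) - 1)) with (t / 2 - p) in H2 by (field; lra). lra.
Qed.

Definition gi s t := Rpower t (s - 1) * exp (- t).

Lemma gi_pos s t : 0 < gi s t.
Proof. unfold gi, Rpower. apply Rmult_lt_0_compat; apply exp_pos. Qed.

Lemma gi_cont s t : 0 < t -> continuous (gi s) t.
Proof.
  intros Ht. apply (@ex_derive_continuous R_AbsRing R_NormedModule). unfold gi, Rpower. auto_derive. lra.
Qed.

Lemma exp_sm1 s t : 0 < t -> exp ((s - 1) * ln t) = exp (s * ln t) * / t.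
Proof.
  intros Ht. replace ((s - 1) * ln t) with (s * ln t + - ln t) by ring.
  rewrite exp_plus, exp_Ropp, exp_ln by lra. reflexivity.
Qed.

Lemma gamma_B1 s a : 0 < s -> 0 < a -> a <= 1 -> RInt (gi s) a 1 <= 1 / s.
Proof.
  intros Hs Ha Ha1.
  assert (HI : is_RInt (fun t => Rpower t (s - 1)) a 1
     (minus (Rpower 1 s / s) (Rpower a s / s))).
  { apply (@is_RInt_derive R_CompleteNormedModule (fun t => Rpower t s / s)).
    - intros x Hx. rewrite Rmin_left in Hx by lra. unfold Rpower.
      auto_derive; [lra|]. rewrite exp_sm1 by lra. field. split; lra.
    - intros x Hx. rewrite Rmin_left in Hx by lra. apply (@ex_derive_continuous R_AbsRing R_NormedModule).
      unfold Rpower. auto_derive. lra. }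
  apply (@is_RInt_unique R_CompleteNormedModule) in HI.
  eapply Rle_trans; [apply (RInt_le _ (fun t => Rpower t (s - 1)))|].
  - exact Ha1.
  - apply (@ex_RInt_continuous R_CompleteNormedModule). intros z Hz.
    rewrite Rmin_left in Hz by lra. apply gi_cont. lra.
  - eexists. apply (@is_RInt_derive R_CompleteNormedModule (fun t => Rpower t s / s)).
    + intros x Hx. rewrite Rmin_left in Hx by lra. unfold Rpower.
      auto_derive; [lra|]. rewrite exp_sm1 by lra. field. split; lra.
    + intros x Hx. rewrite Rmin_left in Hx by lra. apply (@ex_derive_continuous R_AbsRing R_NormedModule).
      unfold Rpower. auto_derive. lra.
  - intros x Hx. unfold gi. rewrite <- (Rmult_1_r (Rpower x (s - 1))) at 2.
    apply Rmult_le_compat_l; [unfold Rpower; apply Rlt_le, exp_pos|].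
    rewrite <- exp_0. apply exp_le'. lra.
  - rewrite HI. unfold minus, plus, opp; simpl. unfold Rpower. rewrite ln_1, Rmult_0_r, exp_0.
    pose proof (exp_pos (s * ln a)). unfold Rdiv.
    assert (0 < / s) by (apply Rinv_0_lt_compat; lra). nra.
Qed.

Definition pK s := Rabs (s - 1) + 1.
Definition KK s := exp (pK s * (ln (2 * pK s) - 1)).

Lemma gi_le_K s t : 1 <= t -> gi s t <= KK s * exp (- t / 2).
Proof.
  intros Ht. unfold gi, KK, Rpower. rewrite <- !exp_plus. apply exp_le'.
  assert (Hp : 0 < pK s) by (unfold pK; pose proof (Rabs_pos (s - 1)); lra).
  assert (Hl : 0 <= ln t) by (rewrite <- ln_1; apply ln_le; lra).
  assert (Hsp : s - 1 <= pK s) by (unfold pK; pose proof (Rle_abs (s - 1)); lra).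
  pose proof (lnle (pK s) t Hp ltac:(lra)). nra.
Qed.

Lemma gamma_B2 s b : 1 <= b -> RInt (gi s) 1 b <= 2 * KK s.
Proof.
  intros Hb.
  assert (HK : 0 < KK s) by apply exp_pos.
  assert (Hd : forall x : R, is_derive (fun t => - 2 * KK s * exp (- t / 2)) x (KK s * exp (- x / 2))).
  { intros x. auto_derive; [auto|]. match goal with |- ?A = ?B => change (@eq R A B) end. unfold Rdiv. field. }
  assert (HI : is_RInt (fun t => KK s * exp (- t / 2)) 1 b
     (minus (- 2 * KK s * exp (- b / 2)) (- 2 * KK s * exp (- 1 / 2)))).
  { apply (@is_RInt_derive R_CompleteNormedModule (fun t => - 2 * KK s * exp (- t / 2))).
    - intros x _. apply Hd.
    - intros x _. apply (@ex_derive_continuous R_AbsRing R_NormedModule). auto_derive. auto. }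
  eapply Rle_trans; [apply (RInt_le _ (fun t => KK s * exp (- t / 2)))|].
  - exact Hb.
  - apply (@ex_RInt_continuous R_CompleteNormedModule). intros z Hz.
    rewrite Rmin_left in Hz by lra. apply gi_cont. lra.
  - eexists. exact HI.
  - intros x Hx. apply gi_le_K. lra.
  - apply (@is_RInt_unique R_CompleteNormedModule) in HI. rewrite HI.
    unfold minus, plus, opp; simpl.
    pose proof (exp_pos (- b / 2)). assert (exp (- 1 / 2) <= 1) by (rewrite <- exp_0; apply exp_le'; lra).
    nra.
Qed.

Lemma gamma_exists s : 0 < s ->
  exists L, is_RInt_gen (gi s) (at_right 0) (Rbar_locally p_infty) L /\ 0 < L.
Proof.
  intros Hs.
  assert (fc : forall t, 0 < t -> continuous (gi s) t) by (intros; apply gi_cont; auto).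
  assert (fp : forall t, 0 < t -> 0 <= gi s t) by (intros; apply Rlt_le, gi_pos).
  destruct (improper_sup (gi s) fc fp (1 / s + 2 * KK s)) as [L [HL H12]].
  - intros a b Ha Ha1 Hb. rewrite (chas (gi s) fc a 1 b) by lra.
    pose proof (gamma_B1 s a Hs Ha Ha1). pose proof (gamma_B2 s b Hb). lra.
  - exists L. split; [exact HL|].
    assert (0 < RInt (gi s) 1 2).
    { apply RInt_gt_0; [lra| intros; apply gi_pos| intros; apply gi_cont; lra]. }
    lra.
Qed.

Lemma Gamma_pos_is s : 0 < s ->
  is_RInt_gen (gi s) (at_right 0) (Rbar_locally p_infty) (Gamma s) /\ 0 < Gamma s.
Proof.
  intros Hs. destruct (gamma_exists s Hs) as [L [HL HL0]].
  assert (E : Gamma s = L).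
  { unfold Gamma. apply (@is_RInt_gen_unique R_CompleteNormedModule); try exact _. exact HL. }
  rewrite E. auto.
Qed.

Definition hh s t := exp (s * ln t) * exp (- t).

Lemma hh_der s t : 0 < t -> is_derive (hh s) t (s * gi s t - gi (s + 1) t).
Proof.
  intros Ht. unfold hh. auto_derive; [lra|].
  unfold gi, Rpower. replace (s + 1 - 1) with s by ring. rewrite exp_sm1 by lra.
  match goal with |- ?A = ?B => change (@eq R A B) end. field. lra.
Qed.

Lemma hh_lim0 s : 0 < s -> filterlim (hh s) (at_right 0) (locally 0).
Proof.
  intros Hs. apply filterlim_locally. intros [eps He]. simpl.
  set (d := exp (ln eps / s)).
  exists (mkposreal d (exp_pos _)). intros y Hy Hy0. simpl in Hy.
  unfold ball in Hy |- *; simpl in Hy |- *. unfold AbsRing_ball, abs, minus, plus, opp in Hy |- *; simpl in Hy |- *.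
  rewrite Ropp_0, Rplus_0_r in Hy |- *. rewrite Rabs_pos_eq in Hy by lra.
  assert (Hh : 0 < hh s y) by (unfold hh; apply Rmult_lt_0_compat; apply exp_pos).
  rewrite Rabs_pos_eq by lra.
  assert (H1 : ln y < ln eps / s).
  { rewrite <- (ln_exp (ln eps / s)). apply ln_increasing; auto. }
  assert (H2 : s * ln y < ln eps).
  { apply (Rmult_lt_compat_l s) in H1; auto. replace (s * (ln eps / s)) with (ln eps) in H1 by (field; lra). exact H1. }
  unfold hh. rewrite <- exp_plus. rewrite <- (exp_ln eps) by lra. apply exp_increasing. lra.
Qed.

Lemma hh_liminf s : 0 < s -> filterlim (hh s) (Rbar_locally p_infty) (locally 0).
Proof.
  intros Hs. apply filterlim_locally. intros [eps He]. simpl.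
  exists (Rmax 1 (2 * (s * (ln (2 * s) - 1) - ln eps))). intros y Hy.
  assert (Hy1 : 1 < y) by (eapply Rle_lt_trans; [apply Rmax_l|exact Hy]).
  assert (Hy2 : 2 * (s * (ln (2 * s) - 1) - ln eps) < y) by (eapply Rle_lt_trans; [apply Rmax_r|exact Hy]).
  unfold ball; simpl. unfold AbsRing_ball, abs, minus, plus, opp; simpl.
  rewrite Ropp_0, Rplus_0_r.
  assert (Hh : 0 < hh s y) by (unfold hh; apply Rmult_lt_0_compat; apply exp_pos).
  rewrite Rabs_pos_eq by lra.
  pose proof (lnle s y Hs ltac:(lra)).
  unfold hh. rewrite <- exp_plus. rewrite <- (exp_ln eps) by lra. apply exp_increasing. lra.
Qed.

Lemma Gamma_succ s : 0 < s -> Gamma (s + 1) = s * Gamma s.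
Proof.
  intros Hs. destruct (Gamma_pos_is s Hs) as [HG _].
  assert (HD : is_RInt_gen (Derive (hh s)) (at_right 0) (Rbar_locally p_infty) (0 - 0)).
  { apply is_RInt_gen_Derive.
    - apply (Filter_prod _ _ _ (fun a => 0 < a) (fun b => 0 < b)).
      + exists (mkposreal 1 Rlt_0_1). intros; auto.
      + exists 0. auto.
      + intros a b Ha Hb x Hx. simpl in Hx. exists (s * gi s x - gi (s + 1) x).
        apply hh_der. destruct Hx as [Hx _]. eapply Rlt_le_trans; [|exact Hx].
        apply Rmin_glb_lt; auto.
    - apply (Filter_prod _ _ _ (fun a => 0 < a) (fun b => 0 < b)).
      + exists (mkposreal 1 Rlt_0_1). intros; auto.
      + exists 0. auto.
      + intros a b Ha Hb x Hx. simpl in Hx.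
        assert (Hx0 : 0 < x).
        { destruct Hx as [Hx _]. eapply Rlt_le_trans; [|exact Hx]. apply Rmin_glb_lt; auto. }
        apply (continuous_ext_loc _ (fun t => s * gi s t - gi (s + 1) t)).
        * assert (Hx2 : 0 < x / 2) by lra. exists (mkposreal _ Hx2). intros y Hy.
          unfold ball in Hy; simpl in Hy. unfold AbsRing_ball, abs, minus, plus, opp in Hy; simpl in Hy.
          symmetry. apply is_derive_unique, hh_der.
          apply Rabs_def2 in Hy. lra.
        * apply (@ex_derive_continuous R_AbsRing R_NormedModule). unfold gi, Rpower.
          auto_derive. lra.
    - apply hh_lim0; auto.
    - apply hh_liminf; auto. }
  pose proof (is_RInt_gen_minus _ _ _ _ (is_RInt_gen_scal _ s _ HG) HD) as H.
  assert (H' : is_RInt_gen (gi (s + 1)) (at_right 0) (Rbar_locally p_infty) (s * Gamma s)).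
  { replace (s * Gamma s) with (minus (scal s (Gamma s)) (0 - 0))
      by (unfold minus, plus, opp, scal; simpl; unfold mult; simpl; ring).
    eapply is_RInt_gen_ext; [|exact H].
    apply (Filter_prod _ _ _ (fun a => 0 < a) (fun b => 0 < b)).
    + exists (mkposreal 1 Rlt_0_1). intros; auto.
    + exists 0. auto.
    + intros a b Ha Hb x Hx. simpl in Hx.
      assert (Hx0 : 0 < x).
      { destruct Hx as [Hx _]. eapply Rle_lt_trans; [|exact Hx]. apply Rlt_le, Rmin_glb_lt; auto. }
      rewrite (is_derive_unique _ _ _ (hh_der s x Hx0)).
      unfold minus, plus, opp, scal; simpl; unfold mult; simpl. ring. }
  unfold Gamma at 1. apply (@is_RInt_gen_unique R_CompleteNormedModule); try exact _. exact H'.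
Qed.


Theorem theorem18 (alpha nu x : R) :
  0 < alpha -> -1 < nu -> 0 < x ->
  0 < Laguerre (nu + 1) (alpha - 1) (- x) / Laguerre nu alpha (- x) /\
  Laguerre (nu + 1) (alpha - 1) (- x) / Laguerre nu alpha (- x) <
    (alpha + x + sqrt ((alpha + x) ^ 2 + 4 * (nu + 1) * x)) / (2 * (nu + 1)).
Proof.
  intros Ha Hn Hx. unfold Laguerre.
  replace (nu + 1 + (alpha - 1) + 1) with (nu + alpha + 1) by ring.
  replace (alpha - 1 + 1) with alpha by ring.
  rewrite (Gamma_succ (nu + 1)) by lra. rewrite (Gamma_succ alpha) by lra.
  rewrite (kummer (- (nu + 1)) alpha x) by lra.
  rewrite (kummer (- nu) (alpha + 1) x) by lra.
  replace (alpha - - (nu + 1)) with (alpha + nu + 1) by ring.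
  replace (alpha + 1 - - nu) with (alpha + nu + 1) by ring.
  destruct (Gamma_pos_is (nu + alpha + 1) ltac:(lra)) as [_ G1].
  destruct (Gamma_pos_is (nu + 1) ltac:(lra)) as [_ G2].
  destruct (Gamma_pos_is alpha Ha) as [_ G3].
  destruct (main_series alpha (alpha + nu + 1) x Ha ltac:(lra) Hx) as [Hg HP].
  assert (Hf : 0 < Series (ww alpha (alpha + nu + 1) x)).
  { apply (series_pos (ww alpha (alpha + nu + 1) x)).
    - intros; apply ww_pos; lra.
    - apply Series_correct, ex_series_ww; lra. }
  set (f := Series (ww alpha (alpha + nu + 1) x)) in *.
  set (g := Series (ww (alpha + 1) (alpha + nu + 1) x)) in *.
  pose proof (exp_pos (- x)) as He.
  set (y := alpha * f / g) in *.
  assert (Hy : 0 < y) by (unfold y; apply Rdiv_lt_0_compat; nra).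
  match goal with |- 0 < ?R /\ _ => replace R with (y / (nu + 1)) end.
  2:{ unfold y. field. repeat split; lra. }
  replace (alpha + nu + 1 - alpha) with (nu + 1) in HP by ring.
  split; [apply Rdiv_lt_0_compat; lra|].
  set (D := (alpha + x) ^ 2 + 4 * (nu + 1) * x).
  assert (Hs : 2 * y - (alpha + x) < sqrt D).
  { destruct (Rlt_or_le (2 * y - (alpha + x)) 0) as [Hneg|Hnn].
    - pose proof (sqrt_pos D). lra.
    - rewrite <- (sqrt_pow2 (2 * y - (alpha + x))) by lra.
      apply sqrt_lt_1_alt. split; [nra|]. unfold D. nra. }
  replace (y / (nu + 1)) with ((2 * y) / (2 * (nu + 1))) by (field; lra).
  unfold Rdiv. apply Rmult_lt_compat_r; [apply Rinv_0_lt_compat; lra|]. lra.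
Qed.
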